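(* Let $\mathcal{B}=\langle V,F,E\rangle$ be a self-contained finite bipartite graph and $M$ an arbitrary perfect matching for $\mathcal{B}$. Then the directed cluster graph $\mathrm{merge}(\mathrm{clust}(\mathcal{G}(\mathcal{B},M)))$ coincides with the output of Algorithm 1 applied to $\mathcal{B}$ with no exogenous vertices.
   Context: $\mathrm{adj}_{\mathcal{B}}(X)$ is the set of neighbours of $X$. $F'\subseteq F$ is self-contained if $|F'|=|\mathrm{adj}_{\mathcal{B}}(F')|$ and $|F''|\le|\mathrm{adj}_{\mathcal{B}}(F'')|$ for all $F''\subseteq F'$; $\mathcal{B}$ is self-contained if $|F|=|V|$ and $F$ is self-contained; minimal self-contained = non-empty self-contained with no non-empty strict self-contained subset. A directed cluster graph is a pair $\langle\mathcal{V},\mathcal{E}\rangle$ with $\mathcal{V}$ a partition of a vertex set and $\mathcal{E}$ a set of edges $x\to C$ from vertices to clusters. $M(X)$ is the set of vertices matched by $M$ to vertices of $X$. (i) $\mathcal{G}(\mathcal{B},M)$: directed graph on $V\cup F$ with, for each $(v-f)\in E$, the edge $f\to v$ if $(v-f)\in M$ and $v\to f$ otherwise. (ii) $\mathrm{clust}(\mathcal{G})=\langle\mathcal{V}',\mathcal{E}'\rangle$: $\mathcal{V}'$ the partition into strongly connected components and $\mathcal{E}'=\{x\to\mathrm{cl}(w):(x\to w)\text{ in }\mathcal{G},\ x\notin\mathrm{cl}(w)\}$, with $\mathrm{cl}(w)$ the component of $w$. (iii) $\mathrm{merge}(\langle\mathcal{V}',\mathcal{E}'\rangle)=\langle\mathcal{V},\mathcal{E}\rangle$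 with $\mathcal{V}=\{S\cup M(S):S\in\mathcal{V}'\}$ and $\mathcal{E}=\{x\to S\cup M(S):(x\to S)\in\mathcal{E}',\ x\notin M(S)\}$. Algorithm 1 (no exogenous vertices): start with $\mathcal{V}=\mathcal{E}=\emptyset$ and $\mathcal{B}'=\langle V',F',E'\rangle=\mathcal{B}$; while $\mathcal{B}'$ is non-null: choose a minimal self-contained set $S_F$ of $\mathcal{B}'$, let $C=S_F\cup\mathrm{adj}_{\mathcal{B}'}(S_F)$, add $C$ to $\mathcal{V}$, add $v\to C$ for every $v\in\mathrm{adj}_{\mathcal{B}}(S_F)\setminus\mathrm{adj}_{\mathcal{B}'}(S_F)$, replace $\mathcal{B}'$ by its subgraph induced by $(V'\cup F')\setminus C$. Output $\langle\mathcal{V},\mathcal{E}\rangle$. *)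

(* Defs.v *)
From mathcomp Require Import all_boot.
Set Implicit Arguments.
Unset Strict Implicit.
Unset Printing Implicit Defensive.

(* Bipartite graph B = <V, F, E>: V, F finite types (disjoint via the sum type
   V + F), E v f = true iff (v - f) is an edge. *)

Section Defs.
Variables (V F : finType) (E : V -> F -> bool).

Notation vx := (V + F)%type.

(* directed cluster graph: (set of clusters, set of edges x -> C) *)
Definition cgraph := ({set {set vx}} * {set vx * {set vx}})%type.

Definition adjB (Vs : {set V}) (X : {set F}) : {set V} :=
  [set v in Vs | [exists f in X, E v f]].

Definition self_contained_in (Vs : {set V}) (Fs : {set F}) (S : {set F}) : bool :=
  [&& S \subset Fs, #|S| == #|adjB Vs S| &
      [forall S' : {set F}, (S' \subset S) ==> (#|S'| <= #|adjB Vs S'|)]].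

Definition minimal_self_contained_in (Vs : {set V}) (Fs : {set F}) (S : {set F}) : bool :=
  [&& self_contained_in Vs Fs S, S != set0 &
      [forall S' : {set F}, ((S' \proper S) && (S' != set0)) ==>
                            ~~ self_contained_in Vs Fs S']].

Definition bip_self_contained : bool :=
  (#|F| == #|V|) && self_contained_in setT setT setT.

Definition perfect_matching (M : {set V * F}) : Prop :=
  [/\ forall v f, (v, f) \in M -> E v f,
      forall v, exists! f, (v, f) \in M &
      forall f, exists! v, (v, f) \in M].

Definition gedge (M : {set V * F}) : rel vx := fun x y =>
  match x, y with
  | inl v, inr f => E v f && ((v, f) \notin M)
  | inr f, inl v => E v f && ((v, f) \in M)
  | _, _ => false
  end.

Definition cl (M : {set V * F}) (w : vx) : {set vx} :=
  [set y | connect (gedge M) w y && connect (gedge M) y w].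

Definition clust (M : {set V * F}) : cgraph :=
  ([set cl M w | w : vx],
   [set (p.1, cl M p.2) | p : vx * vx & gedge M p.1 p.2 && (p.1 \notin cl M p.2)]).

Definition matched (M : {set V * F}) (x y : vx) : bool :=
  match x, y with
  | inl v, inr f => (v, f) \in M
  | inr f, inl v => (v, f) \in M
  | _, _ => false
  end.

Definition Mimg (M : {set V * F}) (X : {set vx}) : {set vx} :=
  [set y | [exists x in X, matched M x y]].

Definition merge_cg (M : {set V * F}) (G : cgraph) : cgraph :=
  ([set S :|: Mimg M S | S in G.1],
   [set (p.1, p.2 :|: Mimg M p.2) | p in G.2 & p.1 \notin Mimg M p.2]).

Definition alg_cluster (Vs : {set V}) (S : {set F}) : {set vx} :=
  ((@inr V F) @: S) :|: ((@inl V F) @: adjB Vs S).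

(* alg1 Vs Fs acc out : running Algorithm 1 from current subgraph B' (with
   vertex sets Vs, Fs) and accumulated output acc can end with output out.
   Every choice of minimal self-contained set is allowed. *)
Inductive alg1 : {set V} -> {set F} -> cgraph -> cgraph -> Prop :=
| alg1_stop (acc : cgraph) : alg1 set0 set0 acc acc
| alg1_step (Vs : {set V}) (Fs : {set F}) (S : {set F}) (acc out : cgraph) :
    (Vs != set0) || (Fs != set0) ->
    minimal_self_contained_in Vs Fs S ->
    alg1 (Vs :\: adjB Vs S) (Fs :\: S)
         (alg_cluster Vs S |: acc.1,
          acc.2 :|: [set (inl v, alg_cluster Vs S) | v in adjB setT S :\: adjB Vs S])
         out ->
    alg1 Vs Fs acc out.

End Defs.

(* Main.v *)
Require Import Defs.
From mathcomp Require Import all_boot.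
Set Implicit Arguments.
Unset Strict Implicit.
Unset Printing Implicit Defensive.

Lemma connect_fwd (T : finType) (e : rel T) x y :
  connect e x y -> x = y \/ exists2 z, e x z & connect e z y.
Proof.
case/connectP => [[|z p]] /= Hp ->; first by left.
right; exists z; first by case/andP: Hp.
by apply/connectP; exists p => //; case/andP: Hp.
Qed.

Lemma connect_bwd (T : finType) (e : rel T) x y :
  connect e x y -> x = y \/ exists2 z, connect e x z & e z y.
Proof.
case/connectP => p; case/lastP: p => [|p z] /=; first by move=> _ ->; left.
rewrite rcons_path last_rcons => /andP [Hp Hz] ->; right.
by exists (last x p) => //; apply/connectP; exists p.
Qed.

Section Proofs.
Variables (V F : finType) (E : V -> F -> bool) (M : {set V * F}) (pm : V -> F) (vof : F -> V).
Hypothesis HME : forall v f, (v,f) \in M -> E v f.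
Hypothesis Hpm : forall v f, ((v,f) \in M) = (pm v == f).
Hypothesis Hvof : forall v f, ((v,f) \in M) = (vof f == v).

Lemma pmK f : pm (vof f) = f.
Proof. by apply/eqP; rewrite -Hpm Hvof. Qed.
Lemma vofK v : vof (pm v) = v.
Proof. by apply/eqP; rewrite -Hvof Hpm. Qed.
Lemma Epm v : E v (pm v).
Proof. by apply: HME; rewrite Hpm. Qed.
Lemma Evof f : E (vof f) f.
Proof. by apply: HME; rewrite Hvof. Qed.

Local Notation G := (gedge E M).

Lemma G_inr f y : G (inr f) y = (y == inl (vof f)).
Proof.
case: y => [v|g]; rewrite /gedge //= Hvof.
have -> : (inl v == inl (vof f) :> V + F) = (v == vof f) by apply/eqP/eqP => [[]|->].
by rewrite eq_sym; case: eqP => [->|]; rewrite ?Evof ?andbF.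
Qed.

Lemma G_inl v g : G (inl v) (inr g) = E v g && (pm v != g).
Proof. by rewrite /= Hpm. Qed.

Lemma G_to_inl z v : G z (inl v) -> z = inr (pm v).
Proof. by case: z => [u|f] //; rewrite G_inr => /eqP [->]; rewrite pmK. Qed.

Lemma G_inr_step v : G (inr (pm v)) (inl v).
Proof. by rewrite G_inr vofK. Qed.

Lemma in_cl w y : (y \in cl E M w) = connect G w y && connect G y w.
Proof. by rewrite inE. Qed.

Lemma cl_refl w : w \in cl E M w.
Proof. by rewrite in_cl connect0. Qed.

Definition C g := [set f | inr f \in cl E M (inr g)].
Definition Kf g : {set V + F} :=
  (@inr V F) @: C g :|: (@inl V F) @: [set v | pm v \in C g].
Definition K w := cl E M w :|: Mimg M (cl E M w).

Lemma inr_UI (A : {set F}) (B : {set V}) f :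
  (inr f \in (@inr V F) @: A :|: (@inl V F) @: B) = (f \in A).
Proof.
apply/idP/idP; last by move=> H; rewrite inE imset_f.
by case/setUP => /imsetP [x Hx] // [->].
Qed.

Lemma inl_UI (A : {set F}) (B : {set V}) v :
  (inl v \in (@inr V F) @: A :|: (@inl V F) @: B) = (v \in B).
Proof.
apply/idP/idP; last by move=> H; rewrite inE orbC imset_f.
by case/setUP => /imsetP [x Hx] // [->].
Qed.

Lemma inC f g : (f \in C g) = (inr f \in cl E M (inr g)).
Proof. by rewrite inE. Qed.

Lemma in_Kf_l v g : (inl v \in Kf g) = (pm v \in C g).
Proof. by rewrite /Kf inl_UI inE. Qed.
Lemma in_Kf_r f g : (inr f \in Kf g) = (f \in C g).
Proof. by rewrite /Kf inr_UI. Qed.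

Lemma C_refl g : g \in C g.
Proof. by rewrite inE cl_refl. Qed.

Lemma cl_inl_inr v w : inl v \in cl E M w -> w != inl v -> inr (pm v) \in cl E M w.
Proof.
rewrite !in_cl => /andP [H1 H2] Hw.
case: (connect_bwd H1) => [Heq|[z Hz Hzv]]; first by rewrite Heq eqxx in Hw.
rewrite -(G_to_inl Hzv) Hz /=.
by apply: connect_trans H2; apply: connect1.
Qed.

Lemma in_Mimg X y : (y \in Mimg M X) = [exists x in X, matched M x y].
Proof. by rewrite inE. Qed.

Lemma K_inr g : K (inr g) = Kf g.
Proof.
apply/setP => -[v|f]; rewrite /K ?in_Kf_l ?in_Kf_r in_setU in_Mimg inC.
- apply/orP/idP.
  + case=> [H|/existsP [[u|f] /andP [Hx Hm]]] //.
      by apply: cl_inl_inr.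
    by rewrite /= Hpm in Hm; rewrite (eqP Hm).
  + by move=> H; right; apply/existsP; exists (inr (pm v)); rewrite H /= Hpm.
- apply/orP/idP; last by left.
  case=> [//|/existsP [[u|h] /andP [Hx Hm]]] //.
  by rewrite /= Hpm in Hm; rewrite -(eqP Hm); apply: cl_inl_inr.
Qed.

Lemma K_inl v : K (inl v) = Kf (pm v).
Proof.
have e0 := G_inr_step v.
case Hc: (connect G (inl v) (inr (pm v))).
  suff Heq : cl E M (inl v) = cl E M (inr (pm v)) by rewrite -K_inr /K Heq.
  apply/setP => y; rewrite !in_cl.
  apply/andP/andP => -[H1 H2]; split.
  - by apply: connect_trans (connect1 e0) H1.
  - by apply: connect_trans H2 Hc.
  - by apply: connect_trans Hc H1.
  - by apply: connect_trans H2 (connect1 e0).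
have Hcl y : (y \in cl E M (inl v)) = (y == inl v).
  rewrite in_cl; apply/andP/eqP => [[H1 H2]|->]; last by rewrite connect0.
  case: (connect_bwd H2) => [//|[z Hz Hzv]].
  rewrite (G_to_inl Hzv) in Hz.
  by rewrite (connect_trans H1 Hz) in Hc.
have HC f : (f \in C (pm v)) = (f == pm v).
  rewrite inE in_cl; apply/andP/eqP => [[H1 H2]|->]; last by rewrite connect0.
  case: (connect_fwd H1) => [[->]//|[z Hz Hzf]].
  rewrite G_inr vofK in Hz; rewrite (eqP Hz) in Hzf.
  by rewrite (connect_trans Hzf H2) in Hc.
apply/setP => -[u|f]; rewrite /K ?in_Kf_l ?in_Kf_r in_setU in_Mimg Hcl HC.
- rewrite (inj_eq (can_inj vofK)).
  have -> : (inl u == inl v :> V + F) = (u == v) by apply/eqP/eqP => [[]|->].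
  apply/orP/idP => [[//|/existsP [x /andP [Hx Hm]]]|->]; last by left.
  by rewrite Hcl in Hx; rewrite (eqP Hx) in Hm.
- apply/orP/idP => [[/eqP//|/existsP [x /andP [Hx Hm]]]|/eqP Hf].
    by rewrite Hcl in Hx; rewrite (eqP Hx) /= Hpm in Hm; rewrite (eqP Hm).
  by right; apply/existsP; exists (inl v); rewrite Hcl eqxx /= Hpm Hf.
Qed.


Lemma T1 : (merge_cg M (clust E M)).1 = [set Kf g | g in [set: F]].
Proof.
apply/setP => X; rewrite /merge_cg /clust /=.
apply/imsetP/imsetP => [[S /imsetP [w _ ->] ->]|[g _ ->]].
- by case: w => [v|g]; [exists (pm v) | exists g]; rewrite ?inE // -?K_inl -?K_inr.
- exists (cl E M (inr g)); first by apply/imsetP; exists (inr g).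
  by rewrite -K_inr.
Qed.

Lemma T2 : (merge_cg M (clust E M)).2 =
  [set (@inl V F vg.1, Kf vg.2) | vg in [set vg : V * F | E vg.1 vg.2 && (pm vg.1 \notin C vg.2)]].
Proof.
apply/setP => -[x Y]; rewrite /merge_cg /clust /=.
apply/imsetP/imsetP.
- case=> -[x' S]; rewrite in_set /= => /andP [/imsetP [[a w] Hq [-> ->]] HnM] [-> ->].
  rewrite inE /= in Hq; case/andP: Hq.
  case: a HnM => [v|f] HnM Hg Hncl.
  + case: w Hg Hncl HnM => [u|g] Hg Hncl HnM; first by [].
    rewrite G_inl in Hg; case/andP: Hg => Hvg _.
    exists (v, g); last by rewrite -K_inr.
    rewrite inE /= Hvg /=; apply/negP => HC.
    have : inl v \in K (inr g) by rewrite K_inr in_Kf_l.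
    by rewrite /K in_setU (negbTE Hncl) (negbTE HnM).
  + rewrite G_inr in Hg; rewrite (eqP Hg) in HnM.
    case/negP: HnM; rewrite in_Mimg; apply/existsP; exists (inl (vof f)).
    by rewrite cl_refl /= Hvof.
- case=> -[v g]; rewrite inE /= => /andP [Hvg HnC] [-> ->].
  have : inl v \notin K (inr g) by rewrite K_inr in_Kf_l.
  rewrite /K in_setU negb_or => /andP [Hncl HnM].
  exists (inl v, cl E M (inr g)); last by rewrite -K_inr.
  rewrite in_set /= HnM andbT; apply/imsetP; exists (inl v, inr g) => //.
  rewrite inE /= Hncl andbT Hpm Hvg /=.
  by apply: contra HnC => /eqP <-; rewrite C_refl.
Qed.

Definition closedS (Vs : {set V}) (S : {set F}) :=
  forall v g, v \in Vs -> g \in S -> E v g -> pm v \in S.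

Lemma vof_set (S : {set F}) : vof @: S = [set v | pm v \in S].
Proof.
apply/setP => v; rewrite inE; apply/imsetP/idP => [[f Hf ->]|H].
  by rewrite pmK.
by exists (pm v); rewrite ?vofK.
Qed.

Lemma adj_sub (Vs : {set V}) (Fs S : {set F}) :
  Vs = [set v | pm v \in Fs] -> S \subset Fs -> vof @: S \subset adjB E Vs S.
Proof.
move=> HV HS; apply/subsetP => v /imsetP [f Hf ->].
rewrite inE HV inE pmK (subsetP HS f Hf) /=; apply/existsP; exists f.
by rewrite Hf Evof.
Qed.

Lemma card_adj (Vs : {set V}) (Fs S : {set F}) :
  Vs = [set v | pm v \in Fs] -> S \subset Fs -> #|S| <= #|adjB E Vs S|.
Proof.
move=> HV HS; rewrite -(card_imset _ (can_inj pmK)).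
exact: subset_leq_card (adj_sub HV HS).
Qed.

Lemma sc_closed (Vs : {set V}) (Fs S : {set F}) :
  Vs = [set v | pm v \in Fs] -> self_contained_in E Vs Fs S ->
  [/\ S \subset Fs, adjB E Vs S = [set v | pm v \in S] & closedS Vs S].
Proof.
move=> HV /and3P [HS /eqP Hc _].
have Hcard : #|vof @: S| = #|adjB E Vs S|.
  by rewrite card_imset -?Hc //; exact: can_inj pmK.
have Hadj : adjB E Vs S = vof @: S.
  apply/esym/setP; exact: (elimT (subset_cardP Hcard) (adj_sub HV HS)).
split => //; first by rewrite Hadj vof_set.
move=> v g Hv Hg Hvg.
have : v \in adjB E Vs S by rewrite inE Hv; apply/existsP; exists g; rewrite Hg.
by rewrite Hadj vof_set inE.
Qed.

Lemma closed_sc (Vs : {set V}) (Fs S : {set F}) :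
  Vs = [set v | pm v \in Fs] -> S \subset Fs -> closedS Vs S ->
  self_contained_in E Vs Fs S.
Proof.
move=> HV HS Hcl.
have Hadj : adjB E Vs S = vof @: S.
  apply/eqP; rewrite eqEsubset (adj_sub HV HS) andbT.
  apply/subsetP => v; rewrite inE => /andP [Hv /existsP [g /andP [Hg Hvg]]].
  by rewrite vof_set inE (Hcl v g).
apply/and3P; split => //.
  by rewrite Hadj card_imset //; exact: can_inj pmK.
apply/forallP => S'; apply/implyP => HS'.
apply: (card_adj HV); exact: subset_trans HS' HS.
Qed.

Definition I12 (Vs : {set V}) (Fs : {set F}) :=
  Vs = [set v | pm v \in Fs] /\ (forall v g, E v g -> v \in Vs -> g \in Fs).

Definition inRem (Vs : {set V}) (Fs : {set F}) (x : V + F) :=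
  match x with inl v => v \in Vs | inr f => f \in Fs end.
Definition inSx (S : {set F}) (x : V + F) :=
  match x with inl v => pm v \in S | inr f => f \in S end.

Lemma rem_step Vs Fs x y : I12 Vs Fs -> G x y -> inRem Vs Fs x -> inRem Vs Fs y.
Proof.
move=> [HV HE']; case: x => [v|f].
- case: y => [u|g]; first by [].
  by rewrite G_inl => /andP [Hvg _] Hv /=; exact: HE' Hvg Hv.
- by rewrite G_inr => /eqP -> /= Hf; rewrite HV inE pmK.
Qed.

Lemma rem_fwd Vs Fs x y : I12 Vs Fs -> connect G x y -> inRem Vs Fs x -> inRem Vs Fs y.
Proof.
move=> HI /connectP [p Hp ->]; elim: p x Hp => //= z p IH x /andP [Hxz Hp] Hx.
by apply: IH Hp _; exact: rem_step Hxz Hx.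
Qed.

Lemma sx_step Vs Fs S x y : I12 Vs Fs -> closedS Vs S -> G x y ->
  inRem Vs Fs x -> inSx S y -> inSx S x.
Proof.
move=> HI Hcl; case: x => [v|f].
- case: y => [u|g]; first by [].
  by rewrite G_inl => /andP [Hvg _] Hv /= Hg; exact: Hcl v g Hv Hg Hvg.
- by rewrite G_inr => /eqP -> _ /=; rewrite pmK.
Qed.

Lemma sx_back Vs Fs S x y : I12 Vs Fs -> closedS Vs S -> connect G x y ->
  inRem Vs Fs x -> inSx S y -> inSx S x.
Proof.
move=> HI Hcl /connectP [p Hp ->]; elim: p x Hp => //= z p IH x /andP [Hxz Hp] Hx Hy.
apply: (sx_step HI Hcl Hxz Hx); apply: IH Hp _ Hy.
exact: rem_step HI Hxz Hx.
Qed.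

Lemma reach Vs Fs S : I12 Vs Fs -> minimal_self_contained_in E Vs Fs S ->
  forall f g, f \in S -> g \in S -> connect G (inr f) (inr g).
Proof.
move=> HI /and3P [Hsc Hne /forallP Hmin] f g Hf Hg.
have [HS Hadj Hcl] := sc_closed HI.1 Hsc.
pose P := [set h | (h \in Fs) && connect G (inr h) (inr g)].
have HPS : P \subset S.
  apply/subsetP => h; rewrite inE => /andP [Hh Hc].
  exact: (sx_back HI Hcl Hc Hh Hg).
have HPcl : closedS Vs P.
  move=> v h Hv; rewrite !inE => /andP [Hh Hc] Hvh.
  have Hv' := Hv; rewrite HI.1 inE in Hv'; rewrite Hv' /=.
  case: (eqVneq (pm v) h) => [->//|Hne'].
  apply: connect_trans Hc; apply: connect_trans (connect1 (G_inr_step v)) _.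
  by apply: connect1; rewrite G_inl Hvh.
have HPsc : self_contained_in E Vs Fs P := closed_sc HI.1 (subset_trans HPS HS) HPcl.
have HP0 : P != set0 by apply/set0Pn; exists g; rewrite inE (subsetP HS g Hg) connect0.
have HPeq : P = S.
  apply/eqP; apply/negPn/negP => Hneq.
  by move: (Hmin P); rewrite properEneq Hneq HPS HP0 HPsc.
by move: Hf; rewrite -HPeq inE => /andP [].
Qed.

Lemma min_sc Vs Fs S : minimal_self_contained_in E Vs Fs S -> self_contained_in E Vs Fs S.
Proof. by case/and3P. Qed.

Lemma C_eq Vs Fs S : I12 Vs Fs -> minimal_self_contained_in E Vs Fs S ->
  forall g, g \in S -> C g = S.
Proof.
move=> HI Hm g Hg; have [HS Hadj Hcl] := sc_closed HI.1 (min_sc Hm).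
apply/setP => f; rewrite inC in_cl; apply/andP/idP => [[H1 H2]|Hf].
  have Hf : f \in Fs := rem_fwd HI H1 (subsetP HS g Hg).
  exact: (sx_back HI Hcl H2 Hf Hg).
by split; apply: (reach HI Hm).
Qed.

Lemma clus_eq Vs Fs S : I12 Vs Fs -> minimal_self_contained_in E Vs Fs S ->
  forall g, g \in S -> alg_cluster E Vs S = Kf g.
Proof.
move=> HI Hm g Hg; have [HS Hadj Hcl] := sc_closed HI.1 (min_sc Hm).
by rewrite /alg_cluster /Kf (C_eq HI Hm Hg) Hadj.
Qed.


Definition acc2 (Fs : {set F}) : {set (V + F) * {set V + F}} :=
  [set (@inl V F vg.1, Kf vg.2) | vg in
     [set vg : V * F | E vg.1 vg.2 && (pm vg.1 \notin C vg.2) && (vg.2 \notin Fs)]].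

Definition Inv Vs Fs (acc : {set {set V + F}} * {set (V + F) * {set V + F}}) :=
  I12 Vs Fs /\ acc = ([set Kf g | g in ~: Fs], acc2 Fs).

Lemma I12_step Vs Fs S : I12 Vs Fs -> self_contained_in E Vs Fs S ->
  I12 (Vs :\: adjB E Vs S) (Fs :\: S).
Proof.
move=> [HV HE'] Hsc; have [HS Hadj Hcl] := sc_closed HV Hsc.
split.
- by apply/setP => v; rewrite Hadj HV !inE.
- move=> v g Hvg; rewrite Hadj !inE => /andP [Hna Hv].
  rewrite (HE' v g Hvg Hv) andbT.
  by apply: contra Hna => Hg; exact: Hcl v g Hv Hg Hvg.
Qed.

Lemma Inv_step Vs Fs S acc : Inv Vs Fs acc -> minimal_self_contained_in E Vs Fs S ->
  Inv (Vs :\: adjB E Vs S) (Fs :\: S)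
    (alg_cluster E Vs S |: acc.1,
     acc.2 :|: [set (inl v, alg_cluster E Vs S) | v in adjB E setT S :\: adjB E Vs S]).
Proof.
move=> [HI ->] Hm /=.
have Hsc := min_sc Hm; have [HS Hadj Hcl] := sc_closed HI.1 Hsc.
have [g0 Hg0] : exists g0, g0 \in S by apply/set0Pn; case/and3P: Hm.
have Hcl' := clus_eq HI Hm.
split; first exact: I12_step.
congr pair.
- apply/setP => X; rewrite in_setU1; apply/orP/imsetP.
  + case=> [/eqP ->|/imsetP [g Hg ->]].
      by exists g0; rewrite ?(Hcl' g0 Hg0) // !inE Hg0.
    by exists g => //; rewrite !inE in Hg *; rewrite (negbTE Hg) andbF.
  + case=> g; rewrite !inE negb_and negbK => /orP [Hg|Hg] ->.
      by left; rewrite (Hcl' g Hg) eqxx.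
    by right; apply/imsetP; exists g => //; rewrite inE.
- apply/setP => -[x Y]; rewrite in_setU; apply/orP/imsetP.
  + case=> /imsetP [].
    * move=> [v g]; rewrite !inE /= => /andP [/andP [Hvg HnC] Hg] [-> ->].
      by exists (v, g) => //; rewrite !inE /= Hvg HnC (negbTE Hg) andbF.
    * move=> v; rewrite Hadj !inE => /andP [HnS /existsP [g /andP [Hg Hvg]]] [-> ->].
      exists (v, g); last by rewrite (Hcl' g Hg).
      by rewrite in_set /= (C_eq HI Hm Hg) Hvg HnS !inE Hg.
  + case=> -[v g]; rewrite in_set /= => /andP [/andP [Hvg HnC] Hg'] [-> ->].
    case: (boolP (g \in S)) => Hg.
    * right; apply/imsetP; exists v; last by rewrite (Hcl' g Hg).
      rewrite (C_eq HI Hm Hg) in HnC.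
      rewrite Hadj !inE HnC /=; apply/existsP; exists g; by rewrite Hg Hvg.
    * left; apply/imsetP; exists (v, g) => //.
      rewrite !inE Hg /= in Hg'; by rewrite in_set /= Hvg HnC Hg'.
Qed.

Lemma uniq_out Vs Fs acc out : alg1 E Vs Fs acc out -> Inv Vs Fs acc ->
  out = merge_cg M (clust E M).
Proof.
elim => {Vs Fs acc out} [acc|Vs Fs S acc out _ Hm _ IH] Hinv.
- case: Hinv => _ ->.
  rewrite [merge_cg _ _]surjective_pairing T1 T2 setC0; congr pair.
  apply/setP => -[x Y]; apply/imsetP/imsetP => -[vg]; rewrite !inE => H ->;
    exists vg => //; rewrite !inE; move: H; rewrite ?andbT //.
- by apply: IH; exact: Inv_step Hinv Hm.
Qed.

Lemma stop_case Vs Fs acc : I12 Vs Fs -> Fs = set0 -> alg1 E Vs Fs acc acc.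
Proof.
move=> [HV _] HF; have HV0 : Vs = set0 by apply/setP => v; rewrite HV HF !inE.
rewrite HV0 HF; exact: alg1_stop.
Qed.

Lemma exists_out n (Vs : {set V}) (Fs : {set F}) (acc : {set {set V + F}} * {set (V + F) * {set V + F}}) : #|Fs| <= n -> I12 Vs Fs -> exists out, alg1 E Vs Fs acc out.
Proof.
elim: n Vs Fs acc => [|n IH] Vs Fs acc Hn HI.
  by exists acc; apply: stop_case => //; apply: cards0_eq; apply/eqP; rewrite -leqn0.
case: (eqVneq Fs set0) => [HF0|HFn]; first by exists acc; exact: stop_case.
pose P := fun S : {set F} => self_contained_in E Vs Fs S && (S != set0).
have HPF : P Fs.
  rewrite /P HFn andbT; apply: (closed_sc HI.1 (subxx _)).
  by move=> v g Hv _ _; move: Hv; rewrite HI.1 inE.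
case: (@arg_minnP _ Fs P (fun S => #|S|) HPF) => S /andP [HSsc HSne] Hmin.
have Hm : minimal_self_contained_in E Vs Fs S.
  apply/and3P; split => //; apply/forallP => S'; apply/implyP => /andP [Hpr Hne'].
  apply/negP => Hsc'.
  have := Hmin S'; rewrite /P Hsc' Hne' => /(_ isT).
  by rewrite leqNgt (proper_card Hpr).
have HI' := I12_step HI HSsc.
have [HS _ _] := sc_closed HI.1 HSsc.
have [g0 Hg0] : exists g0, g0 \in S by apply/set0Pn.
have Hn' : #|Fs :\: S| <= n.
  rewrite -ltnS; apply: leq_trans Hn; apply: proper_card.
  rewrite properEneq subsetDl andbT; apply/eqP => Heq.
  by have := subsetP HS g0 Hg0; rewrite -Heq !inE Hg0.
have [out Hout] := IH _ _ (alg_cluster E Vs S |: acc.1,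
     acc.2 :|: [set (inl v, alg_cluster E Vs S) | v in adjB E setT S :\: adjB E Vs S]) Hn' HI'.
exists out; apply: alg1_step Hout => //; by rewrite HFn orbT.
Qed.

Lemma final :
  (exists out, alg1 E setT setT (set0, set0) out) /\
  (forall out, alg1 E setT setT (set0, set0) out -> out = merge_cg M (clust E M)).
Proof.
have HI : I12 setT setT by split => //; apply/setP => v; rewrite !inE.
split; first by have := @exists_out #|[set: F]| setT setT (set0, set0) (leqnn _) HI.
move=> out H; apply: (uniq_out H); split => //.
rewrite setCT imset0; congr pair.
apply/setP => x; rewrite in_set0; apply/esym/negbTE/negP => /imsetP [vg].
by rewrite !inE andbF.
Qed.

End Proofs.

Theorem lemma41 (V F : finType) (E : V -> F -> bool) (M : {set V * F}) :
  bip_self_contained E -> perfect_matching E M ->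
  (exists out, alg1 E setT setT (set0, set0) out) /\
  (forall out, alg1 E setT setT (set0, set0) out -> out = merge_cg M (clust E M)).
Proof.
move=> _ [HME Hv Hf].
have Hv' : forall v, exists f, (v, f) \in M by move=> v; case: (Hv v) => f [H _]; exists f.
have Hf' : forall f, exists v, (v, f) \in M by move=> f; case: (Hf f) => v [H _]; exists v.
pose pm v := xchoose (Hv' v).
pose vof f := xchoose (Hf' f).
have Hpm : forall v f, ((v, f) \in M) = (pm v == f).
  move=> v f; apply/idP/eqP => [H|<-]; last exact: (xchooseP (Hv' v)).
  case: (Hv v) => f0 [_ Hu].
  by rewrite -(Hu f H); symmetry; apply: Hu; exact: (xchooseP (Hv' v)).
have Hvof : forall v f, ((v, f) \in M) = (vof f == v).
  move=> v f; apply/idP/eqP => [H|<-]; last exact: (xchooseP (Hf' f)).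
  case: (Hf f) => v0 [_ Hu].
  by rewrite -(Hu v H); symmetry; apply: Hu; exact: (xchooseP (Hf' f)).
exact: (final HME Hpm Hvof).
Qed.
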